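(* Let $w$ be a Coxeter element of an irreducible euclidean Coxeter group $W$ acting on the euclidean space $E$ with vector space of translations $V$. Then $w$ is a hyperbolic isometry of $E$, its move-set is a nonlinear affine hyperplane in $V$, and its min-set is a line in $E$. Moreover, any factorization of $w$ as the product of the elements of a simple system is a minimum length reflection factorization of $w$.
   Context: $W$ is generated by the reflections of an $n$-dimensional euclidean space $E$ in the facets of a euclidean $n$-simplex with dihedral angles submultiples of $\pi$, acting properly and cocompactly; a simple system is the set of reflections in the facets of a chamber (image of the simplex), and a Coxeter element is the product of the elements of a simple system in some order. For an isometry $u$ of $E$: its move-set $\mathrm{Mov}(u)\subset V$ is the set of vectors $\lambda$ with $u(x)=x+\lambda$ for some $x\in E$ (an affine subspace of $V$); $u$ is hyperbolic if it has no fixed points (equivalently $\mathrm{Mov}(u)$ does not contain $0$, i.e. is a nonlinear affine subspace); its min-set $\mathrm{Min}(u)$ is the set of points moved by the shortest vector in $\mathrm{Mov}(u)$. Reflection length refers to factorization into reflections of $E$. *)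

(* Defs.v *)
From HB Require Import structures.
From mathcomp Require Import all_boot all_order all_algebra fingroup perm.
From mathcomp Require Import classical_sets reals trigo.
Set Implicit Arguments.
Unset Strict Implicit.
Unset Printing Implicit Defensive.
Import Order.TTheory GRing.Theory Num.Theory.
Local Open Scope ring_scope.
Local Open Scope classical_set_scope.

(* The euclidean space E and its translation space V are both modelled by
   'rV[R]_n with the standard inner product. *)
Definition dotv (R : realType) (n : nat) (u v : 'rV[R]_n) : R := (u *m v^T) 0 0.

Definition refl (R : realType) (n : nat) (b : 'rV[R]_n) (d : R) : 'rV[R]_n -> 'rV[R]_n :=
  fun x => x - ((2 * (dotv x b - d)) / dotv b b) *: b.

Definition is_reflection (R : realType) (n : nat) (f : 'rV[R]_n -> 'rV[R]_n) : Prop :=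
  exists b d, b != 0 /\ f = refl b d.

Definition prodfun (R : realType) (n k : nat) (f : 'I_k -> 'rV[R]_n -> 'rV[R]_n)
  : 'rV[R]_n -> 'rV[R]_n :=
  foldr (fun i acc => f i \o acc) id (enum 'I_k).

(* The simplex C = {x | forall i, c i <= <x, a i>} (a i inward unit normals,
   one facet per i : 'I_n.+1) is a euclidean n-simplex whose dihedral angles
   are submultiples pi/m of pi (m = infinity, i.e. parallel facets with
   angle 0, is allowed; this only happens for n = 1). *)
Definition simplex_set (R : realType) (n : nat) (a : 'I_n.+1 -> 'rV[R]_n)
  (c : 'I_n.+1 -> R) : set 'rV[R]_n :=
  [set x | forall i, c i <= dotv x (a i)].

Definition coxeter_simplex (R : realType) (n : nat) (a : 'I_n.+1 -> 'rV[R]_n)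
  (c : 'I_n.+1 -> R) : Prop :=
  [/\ forall i, dotv (a i) (a i) = 1,
      exists x, forall i, c i < dotv x (a i),
      exists M : R, forall x, simplex_set a c x -> dotv x x <= M &
      forall i j, i != j ->
        (exists m : nat, (2 <= m)%N /\ dotv (a i) (a j) = - cos (pi / m%:R))
        \/ dotv (a i) (a j) = -1 ].

(* irreducibility: the Coxeter diagram is connected *)
Definition irreducible_simplex (R : realType) (n : nat) (a : 'I_n.+1 -> 'rV[R]_n) : Prop :=
  forall A : {set 'I_n.+1}, A != finset.set0 -> A != finset.setTfor 'I_n.+1 ->
    exists i j, [/\ i \in A, j \notin A & dotv (a i) (a j) != 0].

(* The group W generated by the reflections in the facets of the simplex
   (reflections are involutions, so the monoid they generate is the group). *)
Inductive inW (R : realType) (n : nat) (a : 'I_n.+1 -> 'rV[R]_n) (c : 'I_n.+1 -> R)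
  : ('rV[R]_n -> 'rV[R]_n) -> Prop :=
| inW_id : inW a c id
| inW_step (i : 'I_n.+1) (f : 'rV[R]_n -> 'rV[R]_n) :
    inW a c f -> inW a c (refl (a i) (c i) \o f).

(* s is a simple system: the reflections in the facets of a chamber g(C),
   g in W; s i is the reflection in the hyperplane spanned by the facet
   g(C \cap H_i), i.e. in g(H_i). *)
Definition simple_system (R : realType) (n : nat) (a : 'I_n.+1 -> 'rV[R]_n)
  (c : 'I_n.+1 -> R) (s : 'I_n.+1 -> 'rV[R]_n -> 'rV[R]_n) : Prop :=
  exists g, inW a c g /\
    forall i, exists b d, [/\ b != 0, s i = refl b d &
       [set x | dotv x b = d] = g @` [set x | dotv x (a i) = c i]].

Definition coxeter_element (R : realType) (n : nat) (a : 'I_n.+1 -> 'rV[R]_n)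
  (c : 'I_n.+1 -> R) (w : 'rV[R]_n -> 'rV[R]_n) : Prop :=
  exists s (p : 'S_n.+1), simple_system a c s /\ w = prodfun (fun i => s (p i)).

Definition Mov (R : realType) (n : nat) (u : 'rV[R]_n -> 'rV[R]_n) : set 'rV[R]_n :=
  [set u x - x | x in setT].

Definition hyperbolic (R : realType) (n : nat) (u : 'rV[R]_n -> 'rV[R]_n) : Prop :=
  forall x, u x != x.

Definition shortest_in (R : realType) (n : nat) (S : set 'rV[R]_n) (v : 'rV[R]_n) : Prop :=
  S v /\ forall l, S l -> dotv v v <= dotv l l.

Definition MinSet (R : realType) (n : nat) (u : 'rV[R]_n -> 'rV[R]_n) : set 'rV[R]_n :=
  [set x | shortest_in (Mov u) (u x - x)].

Definition nonlinear_affine_hyperplane (R : realType) (n : nat) (S : set 'rV[R]_n) : Prop :=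
  exists b d, [/\ b != 0, d != 0 & S = [set l | dotv l b = d]].

Definition is_line (R : realType) (n : nat) (S : set 'rV[R]_n) : Prop :=
  exists p v, v != 0 /\ S = [set p + t *: v | t in [set: R]].

(* Main.v *)
Require Import Defs.
From HB Require Import structures.
From mathcomp Require Import all_boot all_order all_algebra fingroup perm.
From mathcomp Require Import classical_sets reals trigo boolp.
From mathcomp Require Import ring lra zify.
Import Order.TTheory GRing.Theory Num.Theory.
Local Open Scope ring_scope.

Section Dot.
Context {R : realType} {n : nat}.
Implicit Types u v x y b : 'rV[R]_n.

Lemma dotvE u v : dotv u v = \sum_j u 0 j * v 0 j.
Proof. by rewrite /dotv mxE; apply: eq_bigr => j _; rewrite mxE. Qed.

Lemma dotvC u v : dotv u v = dotv v u.
Proof. by rewrite !dotvE; apply: eq_bigr => j _; rewrite mulrC. Qed.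

Lemma dotvDl u u' v : dotv (u + u') v = dotv u v + dotv u' v.
Proof. by rewrite !dotvE -big_split; apply: eq_bigr => j _; rewrite mxE mulrDl. Qed.

Lemma dotvZl a u v : dotv (a *: u) v = a * dotv u v.
Proof. by rewrite !dotvE mulr_sumr; apply: eq_bigr => j _; rewrite mxE mulrA. Qed.

Lemma dotvNl u v : dotv (- u) v = - dotv u v.
Proof. by rewrite -scaleN1r dotvZl mulN1r. Qed.

Lemma dotvBl u u' v : dotv (u - u') v = dotv u v - dotv u' v.
Proof. by rewrite dotvDl dotvNl. Qed.

Lemma dotv0l v : dotv 0 v = 0.
Proof. by rewrite -(scale0r 0) dotvZl mul0r. Qed.

Lemma dotvDr u v v' : dotv u (v + v') = dotv u v + dotv u v'.
Proof. by rewrite dotvC dotvDl !(dotvC u). Qed.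
Lemma dotvZr a u v : dotv u (a *: v) = a * dotv u v.
Proof. by rewrite dotvC dotvZl dotvC. Qed.
Lemma dotvNr u v : dotv u (- v) = - dotv u v.
Proof. by rewrite dotvC dotvNl dotvC. Qed.
Lemma dotvBr u v v' : dotv u (v - v') = dotv u v - dotv u v'.
Proof. by rewrite dotvDr dotvNr. Qed.
Lemma dotv0r v : dotv v 0 = 0.
Proof. by rewrite dotvC dotv0l. Qed.

Lemma dotv_sumr (I : finType) u (f : I -> 'rV[R]_n) :
  dotv u (\sum_i f i) = \sum_i dotv u (f i).
Proof. exact: (big_morph (dotv u) (dotvDr u) (dotv0r u)). Qed.
Lemma dotv_suml (I : finType) u (f : I -> 'rV[R]_n) :
  dotv (\sum_i f i) u = \sum_i dotv (f i) u.
Proof. by rewrite dotvC dotv_sumr; apply: eq_bigr => i _; rewrite dotvC. Qed.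

Lemma dotv_ge0 u : 0 <= dotv u u.
Proof. by rewrite dotvE; apply: sumr_ge0 => j _; rewrite -expr2 sqr_ge0. Qed.

Lemma dotv_eq0 u : dotv u u = 0 -> u = 0.
Proof.
rewrite dotvE => H; apply/rowP => j; rewrite mxE.
have H' : \sum_i u 0 i ^+ 2 = 0 by rewrite -[RHS]H; apply: eq_bigr => i _; rewrite expr2.
have := @psumr_eq0P _ _ xpredT (fun i => u 0 i ^+ 2) (fun i _ => sqr_ge0 (u 0 i)) H' j isT.
by move=> /eqP; rewrite sqrf_eq0 => /eqP.
Qed.

Lemma dotv_gt0 u : u != 0 -> 0 < dotv u u.
Proof. by move=> nz; rewrite lt_def dotv_ge0 andbT; apply/eqP => /dotv_eq0/eqP; rewrite (negbTE nz). Qed.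

Lemma dotv_mulmx x (A : 'M[R]_n) y : dotv (x *m A) y = dotv x (y *m A^T).
Proof. by rewrite /dotv trmx_mul trmxK mulmxA. Qed.

Lemma mul_tr_dot x b : x *m b^T *m b = dotv x b *: b.
Proof. by rewrite {1}[x *m b^T]mx11_scalar mul_scalar_mx. Qed.

Lemma refl_affine b d x :
  refl b d x = x *m (1%:M - (2 / dotv b b) *: (b^T *m b)) + (2 * d / dotv b b) *: b.
Proof.
rewrite /refl mulmxBr mulmx1 -scalemxAr mulmxA mul_tr_dot scalerA.
rewrite -addrA; congr (_ + _); rewrite -!scaleNr -scalerDl; congr (_ *: _).
by rewrite /GRing.scale /=; ring.
Qed.

End Dot.
Section Seqs.
Context {R : realType} {n : nat} {I : finType}.
Implicit Types (b : I -> 'rV[R]_n) (d : I -> R) (sq : seq I).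

Definition Fs b d sq : 'rV[R]_n -> 'rV[R]_n :=
  foldr (fun i acc => refl (b i) (d i) \o acc) id sq.

Fixpoint Lam b d sq (x : 'rV[R]_n) : I -> R :=
  match sq with
  | [::] => fun _ => 0
  | i :: s => fun j => if j == i then (dotv (Fs b d s x) (b i) - d i) / dotv (b i) (b i)
                       else Lam b d s x j
  end.

Definition Rm (c : 'rV[R]_n) : 'M[R]_n := 1%:M - (2 / dotv c c) *: (c^T *m c).
Definition Qm b sq : 'M[R]_n := foldr (fun i M => M *m Rm (b i)) 1%:M sq.

Lemma Lam0 b d sq x j : j \notin sq -> Lam b d sq x j = 0.
Proof.
elim: sq => [|i s IH] //=; rewrite in_cons negb_or => /andP[/negbTE -> nj].
exact: IH.
Qed.

Lemma sum_Lam_cons b d i s x (f : I -> 'rV[R]_n) : i \notin s ->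
  \sum_j Lam b d (i :: s) x j *: f j =
  Lam b d (i :: s) x i *: f i + \sum_j Lam b d s x j *: f j.
Proof.
move=> ni; rewrite (bigD1 i) //= [in RHS](bigD1 i) //= Lam0 // scale0r add0r.
by congr (_ + _); apply: eq_bigr => j /negbTE ->.
Qed.

Lemma sum_Lam_cons_s b d i s x (f : I -> R) : i \notin s ->
  \sum_j Lam b d (i :: s) x j * f j =
  Lam b d (i :: s) x i * f i + \sum_j Lam b d s x j * f j.
Proof.
move=> ni; rewrite (bigD1 i) //= [in RHS](bigD1 i) //= Lam0 // mul0r add0r.
by congr (_ + _); apply: eq_bigr => j /negbTE ->.
Qed.


Lemma F1 b d sq x : uniq sq ->
  Fs b d sq x = x - 2 *: \sum_j Lam b d sq x j *: b j.
Proof.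
elim: sq => [|i s IH] /=.
  by move=> _; rewrite big1 ?scaler0 ?subr0 // => j _; rewrite scale0r.
case/andP=> ni us; rewrite sum_Lam_cons //= eqxx -/(Fs b d s x).
by rewrite /refl scalerDr opprD addrA addrAC -IH // scalerA mulrA.
Qed.

Lemma F2 b d sq x : (forall i, dotv (b i) (b i) != 0) -> uniq sq ->
  \sum_j Lam b d sq x j * (dotv x (b j) - d j) =
  dotv (\sum_j Lam b d sq x j *: b j) (\sum_j Lam b d sq x j *: b j).
Proof.
move=> hb; elim: sq => [|i s IH] /=.
  move=> _; rewrite big1 ?big1 ?dotv0l // => j _; by rewrite ?scale0r ?mul0r.
case/andP=> ni us; rewrite sum_Lam_cons_s // sum_Lam_cons //= eqxx IH //.
rewrite -/(Fs b d s x) F1 //.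
set S := \sum_j Lam b d s x j *: b j.
set G := dotv (b i) (b i).
have hG : G != 0 by exact: hb.
rewrite dotvBl dotvZl !dotvDl !dotvDr !dotvZl !dotvZr (dotvC (b i) S) -/G.
set l := _ / G.
have hl : l * G = dotv x (b i) - 2 * dotv S (b i) - d i by rewrite /l mulfVK.
have -> : dotv x (b i) - d i = l * G + 2 * dotv S (b i) by rewrite hl; ring.
ring.
Qed.

Lemma F3 b d sq x : (forall i, dotv (b i) (b i) != 0) -> uniq sq ->
  (forall j, Lam b d sq x j = 0) -> forall j, j \in sq -> dotv x (b j) = d j.
Proof.
move=> hb; elim: sq => [|i s IH] //=.
case/andP=> ni us H.
have Hs : forall j, Lam b d s x j = 0.
  move=> j; case: (eqVneq j i) => [->|nji]; first exact: Lam0.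
  by have := H j; rewrite (negbTE nji).
have Fx : Fs b d s x = x.
  by rewrite F1 // big1 ?scaler0 ?subr0 // => j _; rewrite Hs scale0r.
move=> j; rewrite in_cons => /orP[/eqP ->|js]; last exact: IH.
have := H i; rewrite eqxx -/(Fs b d s x) Fx => /eqP; rewrite mulf_eq0 invr_eq0 (negbTE (hb i)) orbF.
by rewrite subr_eq0 => /eqP.
Qed.


Lemma refl_lin (c : 'rV[R]_n) a u v : refl c 0 (a *: u + v) = a *: refl c 0 u + refl c 0 v.
Proof.
rewrite /refl dotvDl dotvZl !subr0; apply/rowP => j; rewrite !mxE; ring.
Qed.

Lemma refl_split (c : 'rV[R]_n) e y : refl c e y = refl c 0 y + (2 * e / dotv c c) *: c.
Proof. rewrite /refl subr0; apply/rowP => j; rewrite !mxE; ring. Qed.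

Definition zd : I -> R := fun _ => 0.
Lemma zdE i : zd i = 0. Proof. by []. Qed.

Lemma Fs_lin b sq a u v : Fs b zd sq (a *: u + v) = a *: Fs b zd sq u + Fs b zd sq v.
Proof. by elim: sq => [|i s IH] //=; rewrite -!/(Fs b zd s _) IH zdE refl_lin. Qed.

Lemma Fs_aff b d sq x : Fs b d sq x = Fs b zd sq x + Fs b d sq 0.
Proof.
elim: sq => [|i s IH] /=; first by rewrite addr0.
rewrite -!/(Fs _ _ s _) zdE refl_split IH.
have := refl_lin (b i) 1 (Fs b zd s x) (Fs b d s 0); rewrite !scale1r => ->.
by rewrite -addrA -refl_split.
Qed.

Lemma Lam_lin b sq a u v j :
  Lam b zd sq (a *: u + v) j = a * Lam b zd sq u j + Lam b zd sq v j.
Proof.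
elim: sq => [|i s IH] /=; first by rewrite mulr0 addr0.
case: (j == i) => //; rewrite -!/(Fs b zd s _) Fs_lin dotvDl dotvZl zdE !subr0.
by rewrite mulrDl mulrA.
Qed.

Lemma refl_mat (c : 'rV[R]_n) y : refl c 0 y = y *m Rm c.
Proof. by rewrite refl_affine mulr0 mul0r scale0r addr0. Qed.

Lemma Fs_mat b sq x : Fs b zd sq x = x *m Qm b sq.
Proof.
elim: sq => [|i s IH] /=; first by rewrite mulmx1.
by rewrite -/(Fs b zd s x) IH zdE refl_mat mulmxA.
Qed.

End Seqs.
Section Core.
Context {R : realType} {n : nat} {I : finType}.
Variables (b : I -> 'rV[R]_n) (d : I -> R) (sq : seq I).
Hypothesis hb : forall i, dotv (b i) (b i) != 0.
Hypothesis RI : forall l : I -> R, \sum_i l i *: b i = 0 -> \sum_i l i * d i = 0 -> forall i, l i = 0.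
Hypothesis C1 : forall x, ~ (forall i, dotv x (b i) = d i).
Hypothesis C2 : forall u, (forall i, dotv u (b i) = 0) -> u = 0.
Hypothesis us : uniq sq.
Hypothesis alls : forall i, i \in sq.

Lemma sumS (l : I -> R) x : \sum_j l j * dotv x (b j) = dotv x (\sum_j l j *: b j).
Proof. by rewrite dotv_sumr; apply: eq_bigr => j _; rewrite dotvZr. Qed.

Lemma two_scale_eq0 (S : 'rV[R]_n) : 2 *: S = 0 -> S = 0.
Proof. by move/eqP; rewrite scaler_eq0 pnatr_eq0 /= => /eqP. Qed.

Lemma fix_S {e x} : Fs b e sq x = x -> \sum_j Lam b e sq x j *: b j = 0.
Proof.
rewrite F1 // => H; apply: two_scale_eq0; apply/eqP; rewrite -oppr_eq0; apply/eqP.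
by have := congr1 (fun y => y - x) H; rewrite /= subrr addrAC subrr add0r.
Qed.

Lemma core_hyp x : Fs b d sq x != x.
Proof.
apply/eqP => Fx; have S0 := fix_S Fx.
have := F2 b d sq x hb us; rewrite S0 dotv0l.
under eq_bigr do rewrite mulrBr.
rewrite sumrB sumS S0 dotv0r sub0r => /eqP; rewrite oppr_eq0 => /eqP Sd.
have L0 := RI _ S0 Sd.
by apply: (C1 x) => i; exact: (F3 b d sq x hb us L0 i (alls i)).
Qed.

Definition ee u := \sum_j Lam b zd sq u j * d j.

Lemma Lam_zero s j : Lam b zd s 0 j = 0.
Proof.
elim: s j => [|i s IH] j //=.
by case: (j == i) => //; rewrite -/(Fs b zd s 0) Fs_mat mul0mx dotv0l zdE subr0 mul0r.
Qed.

Lemma ker0 {u} : Fs b zd sq u = u -> ee u = 0 -> u = 0.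
Proof.
move=> Fu eu; have S0 := fix_S Fu.
have L0 := RI _ S0 eu.
by apply: C2 => i; rewrite (F3 b zd sq u hb us L0 i (alls i)).
Qed.

Lemma core_ker u v0 : Fs b zd sq u = u -> Fs b zd sq v0 = v0 -> v0 != 0 ->
  exists s, u = s *: v0.
Proof.
move=> Fu Fv nv.
have ev : ee v0 != 0 by apply: contra nv => /eqP /(ker0 Fv) ->.
set u' := ee v0 *: u + (- ee u) *: v0.
have Fu' : Fs b zd sq u' = u'.
  by rewrite /u' !Fs_mat in Fu Fv *; rewrite mulmxDl -!scalemxAl Fu Fv.
have Lu' j : Lam b zd sq u' j = ee v0 * Lam b zd sq u j + - ee u * Lam b zd sq v0 j.
  by rewrite /u' Lam_lin -[(- ee u) *: v0]addr0 Lam_lin Lam_zero addr0.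
have eu' : ee u' = 0.
  have -> : ee u' = ee v0 * ee u + - ee u * ee v0.
    rewrite /ee !mulr_sumr -big_split; apply: eq_bigr => j _; rewrite Lu'.
    by rewrite mulrDl !mulrA.
  by rewrite mulNr mulrC subrr.
have := ker0 Fu' eu'; rewrite /u' => /eqP; rewrite addr_eq0 => /eqP H.
exists (ee u / ee v0); apply: (scalerI ev).
by rewrite H scaleNr opprK scalerA; congr (_ *: _); rewrite mulrC mulfVK.
Qed.

End Core.
Section Affine.
Context {R : realType} {n : nat}.
Implicit Types (u v x l : 'rV[R]_n).

Lemma nz_row m p (M : 'M[R]_(m, p)) : M != 0 -> exists i, row i M != 0.
Proof.
move=> nz; apply/existsP; apply: contraR nz; rewrite negb_exists => /forallP H.
by apply/eqP/row_matrixP => i; rewrite row0; apply/eqP; move: (H i); rewrite negbK.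
Qed.

Lemma dot_ker u v : (u <= kermx v^T)%MS = (dotv u v == 0).
Proof.
apply/sub_kermxP/eqP => [H|H]; first by rewrite /dotv H mxE.
by rewrite [u *m v^T]mx11_scalar -/(dotv u v) H; apply/matrixP => i j; rewrite !mxE mul0rn.
Qed.

Lemma shortest_hyp v c l : v != 0 ->
  let mu := (c / dotv v v) *: v in
  dotv l v = c -> dotv l l = dotv mu mu + dotv (l - mu) (l - mu).
Proof.
move=> nv mu hl.
have hG : dotv v v != 0 by rewrite gt_eqF ?dotv_gt0.
have hmu : dotv (l - mu) mu = 0.
  by rewrite /mu dotvZr dotvBl dotvZl hl mulfVK // subrr mulr0.
rewrite !dotvBl !dotvBr (dotvC mu l) -[dotv l mu](subrK (dotv mu mu)).
have : dotv l mu - dotv mu mu = 0 by rewrite -dotvBl.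
move=> ->; rewrite add0r; lra.
Qed.

Lemma affine_analysis (Q : 'M[R]_n) (t : 'rV[R]_n) (w : 'rV[R]_n -> 'rV[R]_n) :
  (forall x, w x = x *m Q + t) -> (forall x, w x != x) ->
  (forall u v0, u *m Q = u -> v0 *m Q = v0 -> v0 != 0 -> exists s, u = s *: v0) ->
  (exists v c, [/\ v != 0, c != 0 & forall l, Mov w l <-> dotv l v = c])
  /\ is_line (MinSet w).
Proof.
move=> hw hyp hker.
set A := Q - 1%:M.
have hA x : x *m A = w x - x - t by rewrite hw /A mulmxBr mulmx1; apply/rowP => j; rewrite !mxE; lra.
have kerA u : (u *m A == 0) = (u *m Q == u).
  by rewrite /A mulmxBr mulmx1 subr_eq0.
have ntA : ~~ (t <= A)%MS.
  apply/negP => /submxP[y hy]; apply/negP: (hyp (- y)).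
  by rewrite hw mulNmx hy /A mulmxBr mulmx1 negbK; apply/eqP/rowP => j; rewrite !mxE; lra.
have nfA : (\rank A < n)%N.
  rewrite ltn_neqAle rank_leq_col andbT; apply: contra ntA => fA; exact: submx_full.
have : kermx A != 0 by rewrite -mxrank_eq0 mxrank_ker -lt0n subn_gt0.
case/nz_row => i0; set v0 := row i0 (kermx A) => nv0.
have v0A : v0 *m A = 0 by rewrite /v0 -row_mul mulmx_ker row0.
have v0Q : v0 *m Q = v0 by apply/eqP; rewrite -kerA v0A.
have kerv0 : (kermx A <= v0)%MS.
  apply/row_subP => i; have : row i (kermx A) *m A = 0 by rewrite -row_mul mulmx_ker row0.
  move/eqP; rewrite kerA => /eqP /(hker _ _) /(_ v0Q nv0) [s ->].
  by apply: scalemx_sub; exact: submx_refl.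
have rkA : \rank A = n.-1.
  have := mxrankS kerv0; rewrite mxrank_ker => h1.
  have h2 := rank_leq_row v0.
  by move: nfA h1 h2; lia.
have : kermx A^T != 0.
  by rewrite -mxrank_eq0 mxrank_ker mxrank_tr rkA; move: nfA; lia.
case/nz_row => i1; set v := row i1 (kermx A^T) => nv.
have vA : A *m v^T = 0 by rewrite -[A]trmxK -trmx_mul /v -row_mul mulmx_ker row0 trmx0.
set K := kermx v^T.
have AK : (A <= K)%MS by apply/sub_kermxP.
have rkK : \rank K = n.-1.
  rewrite mxrank_ker mxrank_tr; have : \rank v = 1%N.
    by apply/eqP; rewrite eqn_leq rank_leq_row lt0n mxrank_eq0.
  by move=> ->; rewrite subn1.
have KA : (K <= A)%MS.
  by have [_ <-] := mxrank_leqif_sup AK; rewrite rkA rkK eqxx.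
have xAv x : dotv (x *m A) v = 0 by apply/eqP; rewrite -dot_ker -/K; apply: submx_trans AK; exact: submxMl.
set c := dotv t v.
have nc : c != 0.
  apply: contra ntA => /eqP hc; apply: submx_trans KA; by rewrite /K dot_ker -/c hc.
have Mov_iff l : Mov w l <-> dotv l v = c.
  split.
    by case=> x _ <-; rewrite -[w x - x](subrK t) -hA dotvDl xAv add0r.
  move=> hl; have : (l - t <= A)%MS.
    by apply: submx_trans KA; rewrite /K dot_ker dotvBl hl subrr.
  case/submxP => y hy; exists y => //; move: hy; rewrite hA => /eqP.
  by rewrite subr_eq => /eqP ->; rewrite subrK.
split; first by exists v, c.
set mu := (c / dotv v v) *: v.
have hG : dotv v v != 0 by rewrite gt_eqF ?dotv_gt0.
have mumov : Mov w mu by apply/Mov_iff; rewrite /mu dotvZl mulfVK.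
have Min_iff x : MinSet w x <-> w x - x = mu.
  have Mx : Mov w (w x - x) by exists x.
  split.
  - case=> _ H; have := H _ mumov.
    rewrite (shortest_hyp _ _ _ nv (proj1 (Mov_iff _) Mx)) -/mu => h.
    have : dotv (w x - x - mu) (w x - x - mu) <= 0 by lra.
    move=> h'; apply/eqP; rewrite -subr_eq0; apply/eqP/dotv_eq0.
    by apply/le_anti; rewrite h' dotv_ge0.
  - move=> hx; split => // l' Ml'.
    rewrite hx (shortest_hyp _ _ _ nv (proj1 (Mov_iff _) Ml')) -/mu.
    by rewrite lerDl dotv_ge0.
case: mumov => x1 _ hx1.
exists x1, v0; split => //.
apply/seteqP; split => x /=.
  move/Min_iff => hx; have : (x - x1) *m A = 0 by rewrite mulmxBl !hA hx hx1 subrr.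
  move/eqP; rewrite kerA => /eqP hQ.
  have [s hs] := hker _ _ hQ v0Q nv0.
  by exists s => //; rewrite -hs addrC subrK.
case=> s _ <-; apply/Min_iff.
have : (x1 + s *: v0) *m A = x1 *m A by rewrite mulmxDl -scalemxAl v0A scaler0 addr0.
by rewrite !hA => /(congr1 (fun z => z + t)); rewrite /= !subrK hx1.
Qed.

End Affine.
Section ReflLength.
Context {R : realType} {n : nat}.

Lemma refl_fix (b : 'rV[R]_n) d x : dotv x b = d -> refl b d x = x.
Proof. by move=> h; rewrite /refl h subrr mulr0 mul0r scale0r subr0. Qed.

Lemma refl_length (w : 'rV[R]_n -> 'rV[R]_n) (v : 'rV[R]_n) (c : R) :
  (forall x, w x != x) -> v != 0 -> c != 0 ->
  (forall l, Mov w l <-> dotv l v = c) ->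
  forall (k : nat) (t : 'I_k -> 'rV[R]_n -> 'rV[R]_n),
    (forall j, is_reflection (t j)) -> w = prodfun t -> (n.+1 <= k)%N.
Proof.
move=> hyp nv nc hMov k t hrefl hwt.
have : forall j, exists p : 'rV[R]_n * R, p.1 != 0 /\ t j = refl p.1 p.2.
  by move=> j; have [b [d [nb ->]]] := hrefl j; exists (b, d).
case/choice => f hf.
set N := \matrix_(j < k) (f j).1.
have rowN j : row j N = (f j).1 by rewrite rowK.
have hs : forall (s : seq 'I_k) x,
    (foldr (fun j acc => t j \o acc) id s x - x <= N)%MS.
  elim=> [|j s IH] x /=; first by rewrite subrr sub0mx.
  rewrite (proj2 (hf j)); set y := foldr _ _ _ _.
  have -> : refl (f j).1 (f j).2 y - x = (refl (f j).1 (f j).2 y - y) + (y - x) by rewrite addrA subrK.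
  apply: addmx_sub; last exact: IH.
  rewrite /refl addrAC subrr add0r -scaleNr.
  by apply: scalemx_sub; rewrite -rowN row_sub.
have MovN l : Mov w l -> (l <= N)%MS.
  by case=> x _ <-; rewrite hwt; apply: hs.
have hG : dotv v v != 0 by rewrite gt_eqF ?dotv_gt0.
set mu := (c / dotv v v) *: v.
have muM : Mov w mu by apply/hMov; rewrite /mu dotvZl mulfVK.
set K := kermx v^T.
have KN : (K <= N)%MS.
  apply/row_subP => i.
  have : dotv (row i K) v = 0 by apply/eqP; rewrite -dot_ker row_sub.
  move=> hr; have : Mov w (mu + row i K).
    by apply/hMov; rewrite dotvDl hr addr0; apply/hMov.
  move/MovN => h1; have h2 := MovN _ muM.
  have -> : row i K = (mu + row i K) + (-1) *: mu by rewrite scaleN1r addrC addKr.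
  by apply: addmx_sub => //; apply: scalemx_sub.
have rkK : \rank K = n.-1.
  rewrite mxrank_ker mxrank_tr; have : \rank v = 1%N.
    by apply/eqP; rewrite eqn_leq rank_leq_row lt0n mxrank_eq0.
  by move=> ->; rewrite subn1.
have rkN : (n <= \rank N)%N.
  rewrite leqNgt; apply/negP => hlt.
  have [_ ] := mxrank_leqif_sup KN.
  have -> : (\rank K == \rank N) = true by apply/eqP; move: (mxrankS KN) hlt; rewrite rkK; lia.
  move/esym => NK.
  have : (mu <= K)%MS by apply: submx_trans NK; exact: MovN.
  by rewrite dot_ker /mu dotvZl mulfVK // (negbTE nc).
rewrite ltnNge; apply/negP => hk.
have rkNk : \rank N = k by apply/eqP; rewrite eqn_leq rank_leq_row; move: (rank_leq_col N) rkN hk => _; lia.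
have fullT : row_full N^T by rewrite /row_full mxrank_tr rkNk.
have := submx_full (\row_j (f j).2) fullT; case/submxP => x0 hx0.
have fixj j : t j x0 = x0.
  rewrite (proj2 (hf j)) refl_fix //.
  have := congr1 (fun M : 'rV_k => M 0 j) hx0; rewrite /= mxE => ->.
  by rewrite dotvE mxE; apply: eq_bigr => i _; rewrite !mxE.
have : prodfun t x0 = x0.
  rewrite /prodfun; elim: (enum 'I_k) => [|j s IH] //=.
  by rewrite IH fixj.
by rewrite -hwt => /eqP; rewrite (negbTE (hyp x0)).
Qed.

End ReflLength.
Section MxStuff.
Context {R : realType} {n : nat}.
Implicit Types (b : 'I_n.+1 -> 'rV[R]_n) (d : 'I_n.+1 -> R).

Definition Mx b d : 'M[R]_n.+1 :=
  \matrix_(i < n.+1, j < n.+1)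
    match unlift ord0 j with Some j' => b i 0 j' | None => - d i end.

Definition ext (e : R) (y : 'rV[R]_n) : 'rV[R]_n.+1 :=
  \row_j match unlift ord0 j with Some j' => y 0 j' | None => e end.

Lemma Mx_col b d e y i : (Mx b d *m (ext e y)^T) i 0 = dotv y (b i) - d i * e.
Proof.
rewrite mxE big_ord_recl !mxE unlift_none dotvE addrC mulNr; congr (_ - _).
by apply: eq_bigr => j _; rewrite !mxE liftK mulrC.
Qed.

Lemma Mx_row0 b d (l : 'rV[R]_n.+1) :
  (l *m Mx b d) 0 ord0 = - \sum_i l 0 i * d i.
Proof.
by rewrite mxE -sumrN; apply: eq_bigr => i _; rewrite mxE unlift_none mulrN.
Qed.

Lemma Mx_rowS b d (l : 'rV[R]_n.+1) j :
  (l *m Mx b d) 0 (lift ord0 j) = (\sum_i l 0 i *: b i) 0 j.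
Proof.
rewrite mxE summxE; apply: eq_bigr => i _; by rewrite !mxE liftK.
Qed.

Lemma rowS_eq0 (z : 'rV[R]_n.+1) : z 0 ord0 = 0 -> (forall j, z 0 (lift ord0 j) = 0) -> z = 0.
Proof.
move=> h0 hS; apply/rowP => j; rewrite mxE; case: (unliftP ord0 j) => [j'|] ->; by [rewrite hS|].
Qed.

Lemma ext_split (z : 'rV[R]_n.+1) : z = ext (z 0 ord0) (\row_j z 0 (lift ord0 j)).
Proof.
by apply/rowP => j; rewrite mxE; case: (unliftP ord0 j) => [j'|] ->; rewrite ?mxE ?liftK ?unlift_none.
Qed.

Lemma ext_eq0 e y : ext e y = 0 -> e = 0 /\ y = 0.
Proof.
move=> h; split.
  by have := congr1 (fun z : 'rV_n.+1 => z 0 ord0) h; rewrite /= !mxE unlift_none.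
apply/rowP => j; have := congr1 (fun z : 'rV_n.+1 => z 0 (lift ord0 j)) h.
by rewrite /= !mxE liftK.
Qed.

Lemma unit_of_rowinj (m : nat) (A : 'M[R]_m) :
  (forall z : 'rV_m, z *m A = 0 -> z = 0) -> A \in unitmx.
Proof.
move=> H; rewrite -row_free_unit -kermx_eq0; apply/eqP/row_matrixP => i.
by rewrite row0; apply: H; rewrite -row_mul mulmx_ker row0.
Qed.

Lemma rowinj_of_unit {m : nat} {A : 'M[R]_m} {z : 'rV_m} :
  A \in unitmx -> z *m A = 0 -> z = 0.
Proof. by move=> uA h; rewrite -(mulmxK uA z) h mul0mx. Qed.

Lemma colinj_of_unit {m : nat} {A : 'M[R]_m} {z : 'cV_m} :
  A \in unitmx -> A *m z = 0 -> z = 0.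
Proof. by move=> uA h; rewrite -(mulKmx uA z) h mulmx0. Qed.

Lemma unit_of_colinj (m : nat) (A : 'M[R]_m) :
  (forall z : 'cV_m, A *m z = 0 -> z = 0) -> A \in unitmx.
Proof.
move=> H; rewrite -unitmx_tr; apply: unit_of_rowinj => z hz.
have : A *m z^T = 0 by rewrite -[A]trmxK -trmx_mul hz trmx0.
by move/H => /(congr1 trmx); rewrite trmxK trmx0.
Qed.

Lemma RI_of_unit b d : Mx b d \in unitmx ->
  forall l : 'I_n.+1 -> R, \sum_i l i *: b i = 0 -> \sum_i l i * d i = 0 -> forall i, l i = 0.
Proof.
move=> uM l hb hd i.
have : \row_i l i = 0.
  apply: (rowinj_of_unit uM); apply: rowS_eq0.
    rewrite Mx_row0.
    have -> : \sum_i (\row_i l i) 0 i * d i = \sum_i l i * d i by apply: eq_bigr => k _; rewrite mxE.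
    by rewrite hd oppr0.
  move=> j; rewrite Mx_rowS.
  have -> : \sum_i (\row_i l i) 0 i *: b i = \sum_i l i *: b i by apply: eq_bigr => k _; rewrite mxE.
  by rewrite hb mxE.
by move/(congr1 (fun z : 'rV_n.+1 => z 0 i)); rewrite /= !mxE.
Qed.

Lemma unit_of_RI b d :
  (forall l : 'I_n.+1 -> R, \sum_i l i *: b i = 0 -> \sum_i l i * d i = 0 -> forall i, l i = 0) ->
  Mx b d \in unitmx.
Proof.
move=> RI; apply: unit_of_rowinj => z hz; apply/rowP => i; rewrite mxE.
apply: (RI (fun i => z 0 i)) => //.
  apply/rowP => j; have := congr1 (fun u : 'rV_n.+1 => u 0 (lift ord0 j)) hz.
  by rewrite /= Mx_rowS !mxE.
have := congr1 (fun u : 'rV_n.+1 => u 0 ord0) hz; rewrite /= Mx_row0 mxE.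
by move/eqP; rewrite oppr_eq0 => /eqP.
Qed.

Lemma C_of_unit b d : Mx b d \in unitmx ->
  forall e y, (forall i, dotv y (b i) = d i * e) -> e = 0 /\ y = 0.
Proof.
move=> uM e y h; apply: ext_eq0.
have : (ext e y)^T = 0.
  apply: (colinj_of_unit uM); apply/matrixP => i j; rewrite ord1 Mx_col h subrr mxE //.
by move/(congr1 trmx); rewrite trmxK trmx0.
Qed.

Lemma unit_of_C b d :
  (forall e y, (forall i, dotv y (b i) = d i * e) -> e = 0 /\ y = 0) -> Mx b d \in unitmx.
Proof.
move=> H; apply: unit_of_colinj => z hz.
set z' := z^T.
have Hz : z' = ext (z' 0 ord0) (\row_j z' 0 (lift ord0 j)) := ext_split z'.
have hz' : Mx b d *m (ext (z' 0 ord0) (\row_j z' 0 (lift ord0 j)))^T = 0 by rewrite -Hz /z' trmxK.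
have [h1 h2] : z' 0 ord0 = 0 /\ \row_j z' 0 (lift ord0 j) = 0.
  apply: H => i; have := congr1 (fun u : 'cV_n.+1 => u i 0) hz'.
  by rewrite /= Mx_col !mxE => /eqP; rewrite subr_eq0 => /eqP.
have : z' = 0.
  rewrite Hz h1 h2; apply/rowP => j; rewrite !mxE; by case: (unlift ord0 j) => [j'|]; rewrite ?mxE.
by move/(congr1 trmx); rewrite /z' trmxK trmx0.
Qed.

End MxStuff.
Section Geom.
Context {R : realType} {n : nat}.
Implicit Types (a b : 'I_n.+1 -> 'rV[R]_n) (c d : 'I_n.+1 -> R).

Lemma dotv_expand (z u : 'rV[R]_n) s :
  dotv (z + s *: u) (z + s *: u) = dotv z z + 2 * s * dotv z u + s ^+ 2 * dotv u u.
Proof. rewrite !dotvDl !dotvDr !dotvZl !dotvZr (dotvC u z); ring. Qed.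

Lemma unbounded a c (M : R) (z u : 'rV[R]_n) :
  (forall x, simplex_set a c x -> dotv x x <= M) -> u != 0 ->
  (forall s, 0 <= s -> simplex_set a c (z + s *: u)) -> False.
Proof.
move=> hM nu hray.
have hG := dotv_gt0 _ nu; set G := dotv u u in hG *.
set B := dotv z u.
set s := (`|2 * B| + `|M| + 1) / G + 1.
have hnum : 0 <= `|2 * B| + `|M| + 1.
  by have := normr_ge0 (2 * B); have := normr_ge0 M; lra.
have hs1 : 1 <= s by rewrite /s lerDr divr_ge0 // ltW.
have hsG : `|2 * B| + `|M| + 1 <= s * G.
  by rewrite /s (mulrDl ((`|2 * B| + `|M| + 1) / G) 1 G) mulfVK ?gt_eqF // mul1r lerDl ltW.
have := hM _ (hray s (le_trans ler01 hs1)); rewrite dotv_expand -/B -/G => h.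
have h1 := ler_norm M; have h2 := ler_norm (- (2 * B)); rewrite normrN in h2.
have h3 := dotv_ge0 z.
have s0 : 0 <= s by exact: (le_trans ler01 hs1).
have h4 : s * (`|2 * B| + `|M| + 1) <= s * (s * G) by rewrite ler_wpM2l.
have h5 : s * (- (2 * B)) <= s * `|2 * B| by rewrite ler_wpM2l.
have h6 : 1 * (`|M| + 1) <= s * (`|M| + 1).
  by rewrite ler_wpM2r // addr_ge0 // normr_ge0.
rewrite expr2 in h; nra.
Qed.

Lemma simplex_C a c : coxeter_simplex a c ->
  forall e y, (forall i, dotv y (a i) = c i * e) -> e = 0 /\ y = 0.
Proof.
case=> ha [x0 hx0] [M hM] _ e y hy.
have He : e = 0.
  case: (eqVneq e 0) => // ne; exfalso.
  set xs := e^-1 *: y.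
  have hxs i : dotv xs (a i) = c i by rewrite dotvZl hy mulrCA mulVf // mulr1.
  set u0 := x0 - xs.
  have hu i : 0 < dotv u0 (a i) by rewrite dotvBl hxs subr_gt0.
  apply: (@unbounded a c M xs u0 hM).
    by apply/eqP => h; have := hu ord0; rewrite h dotv0l ltxx.
  move=> s hs i; rewrite dotvDl hxs dotvZl lerDl; apply: mulr_ge0 => //; exact: ltW.
split=> //; case: (eqVneq y 0) => // ny; exfalso.
apply: (@unbounded a c M x0 y hM ny) => s hs i.
by rewrite dotvDl dotvZl hy He mulr0 mulr0 addr0; apply: ltW.
Qed.

Lemma refl_invol (b : 'rV[R]_n) (d : R) (x : 'rV[R]_n) : dotv b b != 0 -> refl b d (refl b d x) = x.
Proof.
move=> hG; have : dotv (refl b d x) b - d = - (dotv x b - d).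
  by rewrite /refl dotvBl dotvZl mulfVK //; ring.
by move=> H; rewrite {1}/refl H /refl mulrN mulNr scaleNr opprK subrK.
Qed.

Lemma inW_affine a c g : inW a c g -> exists P (tau : 'rV[R]_n), forall y, g y = y *m P + tau.
Proof.
elim=> [|i f _ [P [tau hf]]]; first by exists 1%:M, 0 => y; rewrite mulmx1 addr0.
set P' := 1%:M - (2 / dotv (a i) (a i)) *: ((a i)^T *m a i).
exists (P *m P'), (tau *m P' + (2 * c i / dotv (a i) (a i)) *: a i) => y /=.
by rewrite hf refl_affine -/P' mulmxDl mulmxA addrA.
Qed.

Lemma inW_surj a c g : (forall i, dotv (a i) (a i) != 0) -> inW a c g ->
  forall x, exists y, g y = x.
Proof.
move=> ha; elim=> [|i f _ IH] x; first by exists x.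
have [y hy] := IH (refl (a i) (c i) x); exists y => /=; by rewrite hy refl_invol.
Qed.

Lemma prop_lemma (g : 'rV[R]_n -> 'rV[R]_n) (a0 b0 : 'rV[R]_n) (c0 d0 : R) :
  (exists P (tau : 'rV[R]_n), forall y, g y = y *m P + tau) -> (forall x, exists y, g y = x) ->
  dotv a0 a0 = 1 -> b0 != 0 -> (forall y, dotv y a0 = c0 -> dotv (g y) b0 = d0) ->
  exists al, al != 0 /\ forall y, dotv (g y) b0 - d0 = al * (dotv y a0 - c0).
Proof.
move=> [P [tau hg]] gs ha nb hH.
set be := b0 *m P^T.
have hh y : dotv (g y) b0 - d0 = dotv y be - (d0 - dotv tau b0).
  by rewrite hg dotvDl dotv_mulmx; ring.
set y0 := c0 *: a0.
have hy0 : dotv y0 a0 = c0 by rewrite dotvZl ha mulr1.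
have h0 : dotv y0 be = d0 - dotv tau b0.
  by apply/eqP; rewrite -subr_eq0 -hh hH ?subrr.
set u := be - dotv be a0 *: a0.
have hua : dotv u a0 = 0 by rewrite dotvBl dotvZl ha mulr1 subrr.
have hub : dotv u be = 0.
  have : dotv (g (y0 + u)) b0 - d0 = 0 by rewrite hH ?subrr // dotvDl hy0 hua addr0.
  by rewrite hh dotvDl h0 addrAC subrr add0r.
have u0 : u = 0 by apply: dotv_eq0; rewrite {2}/u dotvBr dotvZr hua mulr0 subr0.
set al := dotv be a0.
have hbe : be = al *: a0 by apply/eqP; rewrite -subr_eq0 -/u u0.
exists al; split.
  apply/negP => /eqP al0.
  have hall x : dotv x b0 = d0.
    have [y <-] := gs x; apply/eqP; rewrite -subr_eq0 hh hbe al0 scale0r dotv0r -h0 hbe al0.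
    by rewrite scale0r dotv0r subrr.
  have d00 : d0 = 0 by rewrite -(hall 0) dotv0l.
  by move: (hall b0); rewrite d00 => /dotv_eq0 /eqP; rewrite (negbTE nb).
move=> y; rewrite hh -h0 hbe !dotvZr hy0; ring.
Qed.

End Geom.
Local Open Scope classical_set_scope.
Section Final.
Context {R : realType} {n : nat}.

Lemma simple_data (a : 'I_n.+1 -> 'rV[R]_n) (c : 'I_n.+1 -> R) s :
  coxeter_simplex a c -> simple_system a c s ->
  exists b d, [/\ forall i, b i != 0, forall i, s i = refl (b i) (d i) & Mx b d \in unitmx].
Proof.
move=> hS [g [hg hs]].
have ha : forall i, dotv (a i) (a i) = 1 by case: hS.
have hanz i : dotv (a i) (a i) != 0 by rewrite ha oner_neq0.
have : forall i, exists p : 'rV[R]_n * R, [/\ p.1 != 0, s i = refl p.1 p.2 &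
    [set x | dotv x p.1 = p.2] = g @` [set x | dotv x (a i) = c i]].
  by move=> i; have [b [d [nb hsb hH]]] := hs i; exists (b, d).
case/choice => f hf.
exists (fun i => (f i).1), (fun i => (f i).2); split.
- by move=> i; case: (hf i).
- by move=> i; case: (hf i).
apply: unit_of_RI => l hlb hld i.
have : forall j, exists al : R, al != 0 /\ forall y, dotv (g y) (f j).1 - (f j).2 = al * (dotv y (a j) - c j).
  move=> j; case: (hf j) => nb _ hH.
  apply: prop_lemma; [exact: inW_affine hg | exact: inW_surj hanz hg | exact: ha | exact: nb |].
  move=> y hy; have : [set x | dotv x (f j).1 = (f j).2] (g y) by rewrite hH; exists y.
  by [].
case/choice => al hal.
set mu := fun j => l j * al j.
have hmu y : \sum_j mu j * (dotv y (a j) - c j) = 0.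
  rewrite (eq_bigr (fun j => l j * (dotv (g y) (f j).1 - (f j).2))); last first.
    by move=> j _; rewrite (proj2 (hal j)) /mu mulrA.
  under eq_bigr do rewrite mulrBr.
  by rewrite sumrB sumS hlb dotv0r hld subrr.
have hmc : \sum_j mu j * c j = 0.
  have := hmu 0; under eq_bigr do rewrite dotv0l sub0r mulrN.
  by rewrite sumrN => /eqP; rewrite oppr_eq0 => /eqP.
have hma : \sum_j mu j *: a j = 0.
  apply: dotv_eq0; have := hmu (\sum_j mu j *: a j).
  by under eq_bigr do rewrite mulrBr; rewrite sumrB sumS hmc subr0.
have RIa := RI_of_unit _ _ (unit_of_C _ _ (simplex_C _ _ hS)).
have := RIa _ hma hmc i; rewrite /mu => /eqP; rewrite mulf_eq0 (negbTE (proj1 (hal i))) orbF.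
by move/eqP.
Qed.

End Final.

Theorem proposition7p2 (R : realType) (n : nat) (a : 'I_n.+1 -> 'rV[R]_n)
  (c : 'I_n.+1 -> R) (w : 'rV[R]_n -> 'rV[R]_n) :
  (0 < n)%N ->
  coxeter_simplex a c ->
  irreducible_simplex a ->
  coxeter_element a c w ->
  [/\ hyperbolic w,
      nonlinear_affine_hyperplane (Mov w),
      is_line (MinSet w) &
      forall (s : 'I_n.+1 -> 'rV[R]_n -> 'rV[R]_n) (p : {perm 'I_n.+1}),
        simple_system a c s -> w = prodfun (fun i => s (p i)) ->
        forall (k : nat) (t : 'I_k -> 'rV[R]_n -> 'rV[R]_n),
          (forall j, is_reflection (t j)) -> w = prodfun t ->
          (n.+1 <= k)%N ].
Proof.
move=> n0 hS _ [s [p [hss hw]]].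
have [b [d [nb hsb uM]]] := simple_data _ _ _ hS hss.
set sq := map p (enum 'I_n.+1).
have hwF : w = Fs b d sq.
  rewrite hw /prodfun /sq; elim: (enum _) => //= j e IH.
  by rewrite IH hsb.
have us : uniq sq by rewrite map_inj_uniq ?enum_uniq //; exact: perm_inj.
have alls i : i \in sq by apply/mapP; exists ((p^-1)%g i); rewrite ?mem_enum ?permKV.
have hb i : dotv (b i) (b i) != 0 by rewrite gt_eqF // dotv_gt0.
have RI := RI_of_unit _ _ uM.
have C1 x : ~ (forall i, dotv x (b i) = d i).
  move=> h; have [] := C_of_unit _ _ uM 1 x.
    by move=> i; rewrite mulr1.
  by move=> /eqP; rewrite oner_eq0.
have C2 u : (forall i, dotv u (b i) = 0) -> u = 0.
  move=> h; have [] := C_of_unit _ _ uM 0 u => //.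
  by move=> i; rewrite mulr0.
have hyp : forall x, w x != x by move=> x; rewrite hwF; exact: core_hyp.
set Q := Qm b sq; set t := Fs b d sq 0.
have hwQ x : w x = x *m Q + t by rewrite hwF Fs_aff Fs_mat.
have hker (u v0 : 'rV[R]_n) : u *m Q = u -> v0 *m Q = v0 -> v0 != 0 -> exists s, u = s *: v0.
  by rewrite /Q -(Fs_mat b sq u) -(Fs_mat b sq v0); exact: (core_ker b d sq hb RI C2 us alls u v0).
have [[v [c0 [nv nc hMov]]] hline] := affine_analysis _ _ _ hwQ hyp hker.
split => //.
- exists v, c0; split => //; apply/seteqP; split => l /=; by move/hMov.
- move=> s' p' _ _ k t' ht hwt; exact: (refl_length _ _ _ hyp nv nc hMov k t' ht hwt).
Qed.
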